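(* Assume $\eta_{(i)}=\tau_{(i)}-1_K$ for all $i\in\Omega$, and let $Y\subseteq\Omega$. Then: (1) for any $D\subseteq\max(Y)$, $\displaystyle\pi(Y,D)=\sum_{A\subseteq D}(-1)^{|A|}\Big(\prod_{i\in\langle A\rangle_Y}\tau_{(i)}x\Big)\pi(Y-\langle A\rangle_Y,\emptyset)$; (2) for any $D\subseteq\max(Y)$, $\displaystyle\Big(\prod_{i\in\langle D\rangle_Y}\tau_{(i)}x\Big)\pi(Y-\langle D\rangle_Y,\emptyset)=\sum_{A\subseteq D}(-1)^{|A|}\pi(Y,A)$.
   Context: $\Omega$ is a finite set and $\mathbf{P}=(\Omega,\preccurlyeq_{\mathbf{P}})$ a poset. For $Y\subseteq\Omega$: $\max(Y)$ is the set of maximal elements of $Y$ w.r.t. $\preccurlyeq_{\mathbf{P}}$; $\mathcal{I}(Y)$ is the set of down-closed subsets of $Y$ (with the induced order); for $A\subseteq Y$, $\langle A\rangle_Y=\{y\in Y:\exists a\in A, y\preccurlyeq_{\mathbf{P}}a\}$. $K$ is a commutative ring, $\tau,\eta\in K^{\Omega}$. For $D,I\subseteq\Omega$, $\varphi(D,I)=(-1)^{|I\cap D|}\big(\prod_{i\in I-\max(I)}\tau_{(i)}\big)\big(\prod_{i\in\max(I)-D}\eta_{(i)}\big)$ if $I\cap D\subseteq\max(I)$, and $0$ otherwise. For $D\subseteq Y\subseteq\Omega$, $\pi(Y,D)=\sum_{I\in\mathcal{I}(Y)}\varphi(D,I)x^{|I|}\in K[x]$. The expression $\prod_{i\in S}\tau_{(i)}x$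 means $\prod_{i\in S}(\tau_{(i)}x)$. *)

(* Defs.v *)
From HB Require Import structures.
From mathcomp Require Import all_boot all_order all_algebra.
Set Implicit Arguments. Unset Strict Implicit. Unset Printing Implicit Defensive.
Import Order.TTheory GRing.Theory.
Local Open Scope ring_scope.

Section PosetPoly.
Variables (d : Order.disp_t) (T : finPOrderType d).

Definition maxs (Y : {set T}) : {set T} :=
  [set y in Y | [forall z in Y, (y <= z)%O ==> (z == y)]].

Definition ideals (Y : {set T}) : {set {set T}} :=
  [set I : {set T} | (I \subset Y) &&
     [forall i in I, forall j in Y, (j <= i)%O ==> (j \in I)]].

Definition gen (Y A : {set T}) : {set T} :=
  [set y in Y | [exists a in A, (y <= a)%O]].

Variables (K : comNzRingType) (tau eta : T -> K).

Definition phi_poset (D I : {set T}) : K :=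
  if I :&: D \subset maxs I then
    (-1) ^+ #|I :&: D| * (\prod_(i in I :\: maxs I) tau i)
      * (\prod_(i in maxs I :\: D) eta i)
  else 0.

Definition pi_poset (Y D : {set T}) : {poly K} :=
  \sum_(I in ideals Y) phi_poset D I *: 'X^#|I|.

End PosetPoly.

(* Main.v *)
Require Import Defs.
From HB Require Import structures.
From mathcomp Require Import all_boot all_order all_algebra ring.
Import Order.TTheory GRing.Theory.
Local Open Scope ring_scope.

Section Aux.
Variables (d : Order.disp_t) (T : finPOrderType d).
Implicit Types (Y A B D I J S : {set T}).

Lemma in_gen Y A x : (x \in gen Y A) = (x \in Y) && [exists a in A, (x <= a)%O].
Proof. by rewrite /gen inE. Qed.

Lemma in_maxs Y x : (x \in maxs Y) = (x \in Y) && [forall z in Y, (x <= z)%O ==> (z == x)].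
Proof. by rewrite /maxs inE. Qed.

Lemma in_ideals Y I : (I \in ideals Y) = (I \subset Y) &&
     [forall i in I, forall j in Y, (j <= i)%O ==> (j \in I)].
Proof. by rewrite /ideals inE. Qed.

Lemma gen1 Y a x : (x \in gen Y [set a]) = (x \in Y) && (x <= a)%O.
Proof.
rewrite in_gen; congr (_ && _); apply/existsP/idP => [[b /andP[]]|h].
  by rewrite inE => /eqP ->.
by exists a; rewrite inE eqxx.
Qed.

Lemma gen0 Y : gen Y set0 = set0.
Proof. by apply/setP => x; rewrite in_gen inE; case: (x \in Y) => //=; apply/existsP => -[a]; rewrite inE. Qed.

Lemma gen_sub Y A : gen Y A \subset Y.
Proof. by apply/subsetP => x; rewrite in_gen => /andP[]. Qed.

Lemma genU Y A B : gen Y (A :|: B) = gen Y A :|: gen Y B.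
Proof.
apply/setP => x; rewrite !in_gen !inE -andb_orr; congr (_ && _).
apply/existsP/orP => [[a /andP[]]|].
  by rewrite inE => /orP[] Ha Hx; [left|right]; apply/existsP; exists a; rewrite Ha.
by case=> /existsP[a /andP[Ha Hx]]; exists a; rewrite inE Ha ?orbT.
Qed.

Lemma genD Y S A : gen (Y :\: S) A = gen Y A :\: S.
Proof. by apply/setP => x; rewrite !in_gen !inE -!andbA; case: (x \in S); rewrite ?andbF. Qed.

Lemma maxsP Y x : reflect (x \in Y /\ forall z, z \in Y -> (x <= z)%O -> z = x) (x \in maxs Y).
Proof.
rewrite in_maxs; apply: (iffP andP) => -[Hx H]; split => //.
  by move=> z Hz Hxz; move/forall_inP: H => /(_ z Hz); rewrite Hxz => /eqP.
by apply/forall_inP => z Hz; apply/implyP => /(H z Hz) ->.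
Qed.

Lemma maxs_sub Y S x : S \subset Y -> x \in S -> x \in maxs Y -> x \in maxs S.
Proof.
move=> /subsetP SY Sx /maxsP[_ H]; apply/maxsP; split=> // z Sz; exact: H (SY _ Sz).
Qed.

Lemma capD_maxs Y I D : I \subset Y -> D \subset maxs Y -> I :&: D \subset maxs I.
Proof.
move=> IY /subsetP DY; apply/subsetP => x; rewrite inE => /andP[Ix Dx].
exact: maxs_sub IY Ix (DY _ Dx).
Qed.


Set Implicit Arguments. Unset Strict Implicit.
Section SetAlg.
Variables (G J M D : {set T}) (a : T).
Hypotheses (aG : a \in G) (GJ : forall x, x \in G -> x \notin J)
  (MJ : M \subset J) (DG : forall x, x \in D -> x \notin G).

Lemma aJ : a \notin J. Proof. exact: GJ aG. Qed.
Lemma aM : a \notin M. Proof. by apply: contra aJ; apply: (subsetP MJ). Qed.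
Lemma aD : a \notin D. Proof. by apply: contraL aG; apply: DG. Qed.

Lemma sa1 : (J :|: G) :&: (a |: D) = a |: (J :&: D).
Proof.
apply/setP => x; rewrite !inE; case: eqP => [->|_]; first by rewrite aG orbT.
by case Dx: (x \in D); rewrite ?andbF ?andbT //= (negbTE (DG Dx)) orbF.
Qed.

Lemma sa2 : (J :|: G) :&: D = J :&: D.
Proof.
apply/setP => x; rewrite !inE.
by case Dx: (x \in D); rewrite ?andbF ?andbT //= (negbTE (DG Dx)) orbF.
Qed.

Lemma sa3 : (J :|: G) :\: (a |: M) = (G :\ a) :|: (J :\: M).
Proof.
apply/setP => x; rewrite !inE; case: eqP => [->|_] /=.
  by rewrite (negbTE aJ) !andbF.
case Gx: (x \in G); last by rewrite orbF.
rewrite (negbTE (GJ Gx)) andbT; apply: contra (GJ Gx); exact: (subsetP MJ).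
Qed.

Lemma sa4 : (a |: M) :\: (a |: D) = M :\: D.
Proof. by apply/setP => x; rewrite !inE; case: eqP => [->|_] //=; rewrite (negbTE aM) andbF. Qed.

Lemma sa5 : (a |: M) :\: D = a |: (M :\: D).
Proof. by apply/setP => x; rewrite !inE; case: eqP => [->|_] //=; rewrite (negbTE aD). Qed.

Lemma sa_disj : [disjoint G :\ a & J :\: M].
Proof.
apply/pred0P => x /=; rewrite !inE; case Gx: (x \in G); last by rewrite andbF.
by rewrite (negbTE (GJ Gx)) !andbF.
Qed.

End SetAlg.

Section PosetG.
Variables (Y : {set T}) (a : T).
Hypothesis aY : a \in maxs Y.
Local Notation G := (gen Y [set a]).

Lemma aYY : a \in Y. Proof. by case/maxsP: aY. Qed.

Lemma aGG : a \in G. Proof. by rewrite gen1 aYY lexx. Qed.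

Lemma DGG D x : D \subset maxs Y -> a \notin D -> x \in D -> x \notin G.
Proof.
move=> /subsetP DY aD Dx; rewrite gen1; apply/negP => /andP[_ xa].
case/maxsP: (DY _ Dx) => _ /(_ a aYY xa) ax.
by move: aD; rewrite ax Dx.
Qed.

Lemma GJJ J x : J \subset Y :\: G -> x \in G -> x \notin J.
Proof. by move=> /subsetP JY Gx; apply/negP => /JY; rewrite inE Gx. Qed.

Lemma maxsU J : J \subset Y :\: G -> maxs (J :|: G) = a |: maxs J.
Proof.
move=> JYG; have JY : J \subset Y by apply: subset_trans JYG (subsetDl _ _).
apply/setP => x; rewrite in_setU1; apply/maxsP/orP => [[]|].
- rewrite inE => /orP[Jx|Gx] H.
    right; apply/maxsP; split=> // z Jz; apply: H; by rewrite inE Jz.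
  left; apply/eqP/esym; apply: H; first by rewrite inE aGG orbT.
  by move: Gx; rewrite gen1 => /andP[].
- case=> [/eqP ->|/maxsP [Jx H]].
    split; first by rewrite inE aGG orbT.
    case/maxsP: aY => _ H z; rewrite inE => /orP[Jz|Gz]; apply: H => //.
      exact: (subsetP JY).
    by move: Gz; rewrite gen1 => /andP[].
  split; first by rewrite inE Jx.
  move=> z; rewrite inE => /orP[Jz|Gz xz]; first exact: H.
  exfalso; have: x \in G.
    move: Gz; rewrite !gen1 => /andP[_ za]; rewrite (subsetP JY _ Jx) /=.
    exact: le_trans xz za.
  by move/(GJJ JYG); rewrite Jx.
Qed.

Lemma idealU J : J \in ideals (Y :\: G) -> J :|: G \in ideals Y.
Proof.
rewrite !in_ideals => /andP[JYG /forall_inP H].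
have JY : J \subset Y by apply: subset_trans JYG (subsetDl _ _).
rewrite subUset JY gen_sub /=; apply/forall_inP => i; rewrite inE => Ii.
apply/forall_inP => j Yj; apply/implyP => ji; rewrite inE.
case Gj: (j \in G); first by rewrite orbT.
case/orP: Ii => [Ji|Gi].
  by move/forall_inP: (H i Ji) => /(_ j); rewrite inE Gj Yj ji => /(_ isT) /implyP ->.
move: Gi Gj; rewrite !gen1 Yj => /andP[_ ia] /=.
by rewrite (le_trans ji ia).
Qed.

Lemma idealD I : I \in ideals Y -> a \in I -> (G \subset I) /\ (I :\: G \in ideals (Y :\: G)).
Proof.
rewrite !in_ideals => /andP[IY /forall_inP H] aI; split.
  apply/subsetP => x; rewrite gen1 => /andP[Yx xa].
  by move/forall_inP: (H a aI) => /(_ x Yx) /implyP; apply.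
rewrite setSD //=; apply/forall_inP => i; rewrite inE => /andP[Gi Ii].
apply/forall_inP => j; rewrite inE => /andP[Gj Yj]; apply/implyP => ji.
rewrite inE Gj /=.
by move/forall_inP: (H i Ii) => /(_ j Yj) /implyP; apply.
Qed.

End PosetG.

Lemma bigsetU (R : Type) (idx : R) (op : Monoid.com_law idx) (A B : {set T}) F :
  [disjoint A & B] ->
  \big[op/idx]_(i in A :|: B) F i = op (\big[op/idx]_(i in A) F i) (\big[op/idx]_(i in B) F i).
Proof. by move=> dAB; rewrite -bigU //; apply: eq_bigl => x; rewrite in_setU. Qed.

Lemma maxs_subset J : maxs J \subset J.
Proof. by apply/subsetP => x /maxsP[]. Qed.

Section Poly.
Variables (K : comNzRingType) (tau eta : T -> K).
Hypothesis Heta : forall i, eta i = tau i - 1.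

Lemma phi_term Y a D J : a \in maxs Y -> D \subset maxs Y -> a \notin D ->
  J \in ideals (Y :\: gen Y [set a]) ->
  phi_poset tau eta (a |: D) (J :|: gen Y [set a]) =
  phi_poset tau eta D (J :|: gen Y [set a]) -
    (\prod_(i in gen Y [set a]) tau i) * phi_poset tau eta D J.
Proof.
move=> aY DY aD; rewrite in_ideals => /andP[JYG _].
have JY : J \subset Y by apply: subset_trans JYG (subsetDl _ _).
have IY : J :|: gen Y [set a] \subset Y by rewrite subUset JY gen_sub.
have aDY : a |: D \subset maxs Y by rewrite subUset sub1set aY.
rewrite /phi_poset (capD_maxs _ _ _ IY DY) (capD_maxs _ _ _ IY aDY) (capD_maxs _ _ _ JY DY).
rewrite (maxsU aY JYG).
have aG := aGG aY.
have GJ := fun x => @GJJ Y a J x JYG.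
have DG := fun x => @DGG Y a aY D x DY aD.
have MJ := maxs_subset J.
rewrite (sa1 J aG DG) (sa2 J DG) (sa3 aG GJ MJ) (sa4 D aG GJ MJ) (sa5 (maxs J) aG DG).
rewrite cardsU1 inE (negbTE (aJ aG GJ)) /= add1n exprS.
rewrite big_setU1 /=; last by rewrite in_setD (negbTE (aM aG GJ MJ)) andbF.
rewrite bigsetU /=; last exact: sa_disj.
rewrite (big_setD1 _ aG) Heta /=.
ring.
Qed.

Lemma sum_reindex Y a (F : {set T} -> {poly K}) : a \in maxs Y ->
  \sum_(I in ideals Y | a \in I) F I =
  \sum_(J in ideals (Y :\: gen Y [set a])) F (J :|: gen Y [set a]).
Proof.
move=> aY; set G := gen Y [set a].
have key J : J \in ideals (Y :\: G) -> (J :|: G) :\: G = J.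
  rewrite in_ideals => /andP[JYG _].
  apply/setP => x; rewrite !in_setD in_setU.
  case Gx: (x \in G); rewrite ?andbT /=; last by rewrite orbF.
  by move: (GJJ JYG Gx) => /negbTE ->.
transitivity (\sum_(I in (fun J => J :|: G) @: ideals (Y :\: G)) F I); last first.
  by apply: big_imset => J1 J2 H1 H2 /= E; rewrite -(key _ H1) -(key _ H2) E.
apply: eq_bigl => I; apply/andP/imsetP => [[HI aI]|[J HJ ->]].
  case: (idealD HI aI) => GI HD; exists (I :\: G) => //.
  apply/setP => x; rewrite in_setU in_setD.
  case Gx: (x \in G) => /=; last by rewrite orbF.
  by rewrite (subsetP GI _ Gx).
by split; [apply: idealU | rewrite in_setU aGG ?orbT].
Qed.

Lemma keyK Y a D : a \in maxs Y -> D \subset maxs Y -> a \notin D ->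
  pi_poset tau eta Y (a |: D) =
  pi_poset tau eta Y D - (\prod_(i in gen Y [set a]) ((tau i)%:P * 'X)) *
     pi_poset tau eta (Y :\: gen Y [set a]) D.
Proof.
move=> aY DY aD; rewrite /pi_poset.
have S E : \sum_(I in ideals Y) phi_poset tau eta E I *: 'X^#|I| =
   \sum_(I in ideals Y | a \in I) phi_poset tau eta E I *: 'X^#|I| +
   \sum_(I in ideals Y | a \notin I) phi_poset tau eta E I *: 'X^#|I|.
  exact: bigID.
rewrite !S !sum_reindex //.
have E2 : \sum_(I in ideals Y | a \notin I) phi_poset tau eta (a |: D) I *: 'X^#|I| =
          \sum_(I in ideals Y | a \notin I) phi_poset tau eta D I *: 'X^#|I|.
  apply: eq_bigr => I /andP[_ aI]; rewrite /phi_poset.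
  have -> : I :&: (a |: D) = I :&: D.
    apply/setP => x; rewrite !in_setI in_setU1; case: eqP => [->|] //=.
    by rewrite (negbTE aI).
  have -> : maxs I :\: (a |: D) = maxs I :\: D.
    apply/setP => x; rewrite !in_setD in_setU1; case: eqP => [->|] //=.
    by apply/esym/negbTE; apply/negP => /andP[_ /maxsP[aI' _]]; rewrite aI' in aI.
  by [].
have E1 : \sum_(J in ideals (Y :\: gen Y [set a]))
     phi_poset tau eta (a |: D) (J :|: gen Y [set a]) *: 'X^#|J :|: gen Y [set a]| =
   \sum_(J in ideals (Y :\: gen Y [set a]))
     phi_poset tau eta D (J :|: gen Y [set a]) *: 'X^#|J :|: gen Y [set a]| -
   \sum_(J in ideals (Y :\: gen Y [set a]))
     (\prod_(i in gen Y [set a]) ((tau i)%:P * 'X)) * (phi_poset tau eta D J *: 'X^#|J|).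
  rewrite -sumrB; apply: eq_bigr => J HJ.
  rewrite phi_term // scalerBl; congr (_ - _).
  have -> : #|J :|: gen Y [set a]| = (#|J| + #|gen Y [set a]|)%N.
    rewrite -cardsUI; have -> : J :&: gen Y [set a] = set0; last by rewrite cards0 addn0.
    move: HJ; rewrite in_ideals => /andP[JYG _].
    apply/setP => x; rewrite in_setI in_set0; case Gx: (x \in gen Y [set a]); last by rewrite andbF.
    by rewrite (negbTE (GJJ JYG Gx)).
  rewrite big_split /= -rmorph_prod prodr_const exprD -!mul_polyC polyCM.
  ring.
rewrite E1 E2 -mulr_sumr.
by rewrite addrAC.
Qed.

End Poly.

Lemma GS1 (R : comNzRingType) (f : T -> R) Y a A :
  \prod_(i in gen Y (a |: A)) f i =
  \prod_(i in gen Y [set a]) f i * \prod_(i in gen (Y :\: gen Y [set a]) A) f i.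
Proof.
rewrite genU genD.
have -> : gen Y [set a] :|: gen Y A = gen Y [set a] :|: (gen Y A :\: gen Y [set a]).
  apply/setP => x; rewrite !in_setU in_setD.
  by case: (x \in gen Y [set a]); rewrite ?orbT ?andbT.
rewrite bigsetU //; apply/pred0P => x /=; rewrite in_setD.
by case: (x \in gen Y [set a]); rewrite ?andbF.
Qed.

Lemma GS2 Y a A :
  Y :\: gen Y (a |: A) = (Y :\: gen Y [set a]) :\: gen (Y :\: gen Y [set a]) A.
Proof.
rewrite genU genD; apply/setP => x; rewrite !in_setD in_setU.
by case: (x \in gen Y [set a]); case: (x \in gen Y A).
Qed.

Lemma sum_subsetU1 (V : nmodType) a D (f : {set T} -> V) : a \notin D ->
  \sum_(A : {set T} | A \subset a |: D) f A =
  \sum_(A : {set T} | A \subset D) f A + \sum_(A : {set T} | A \subset D) f (a |: A).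
Proof.
move=> aD; rewrite (bigID (fun A => a \in A)) /= addrC; congr (_ + _).
  apply: eq_bigl => A; apply/andP/idP => [[/subsetP H aA]|AD].
    apply/subsetP => x xA; move: (H x xA); rewrite in_setU1; case: eqP => //= xa.
    by move: aA; rewrite -xa xA.
  split; first exact: subset_trans AD (subsetU1 _ _).
  by apply: contra aD; apply: (subsetP AD).
transitivity (\sum_(A in (fun B => a |: B) @: [set B : {set T} | B \subset D]) f A); last first.
  rewrite big_imset /=; first by apply: eq_bigl => B; rewrite inE.
  move=> B1 B2; rewrite !inE => H1 H2 /= E.
  have nB B : B \subset D -> a \notin B by move=> BD; apply: contra aD; apply: (subsetP BD).
  by rewrite -(setU1K (nB _ H1)) -(setU1K (nB _ H2)) E.
apply: eq_bigl => A; apply/andP/imsetP => [[/subsetP H aA]|[B]].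
  exists (A :\ a); last by rewrite setD1K.
  rewrite inE; apply/subsetP => x; rewrite in_setD1 => /andP[xa xA].
  by move: (H x xA); rewrite in_setU1 (negbTE xa).
rewrite inE => BD ->; split; first by rewrite setUS.
by rewrite setU11.
Qed.

Section Main.
Variables (K : comNzRingType) (tau eta : T -> K).
Hypothesis Heta : forall i, eta i = tau i - 1.
Local Notation Pr S := (\prod_(i in S) ((tau i)%:P * 'X)).
Local Notation pi := (pi_poset tau eta).

Lemma sum_sub0 (V : nmodType) (f : {set T} -> V) :
  \sum_(A : {set T} | A \subset set0) f A = f set0.
Proof. by rewrite (big_pred1 set0) // => A; rewrite subset0. Qed.

Lemma step_facts Y D a : D \subset maxs Y -> a \in D ->
  [/\ a \in maxs Y, D :\ a \subset maxs Y, a \notin D :\ a,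
      D :\ a \subset maxs (Y :\: gen Y [set a]) & D = a |: (D :\ a)].
Proof.
move=> DY aD; have aY := subsetP DY _ aD.
have D'Y : D :\ a \subset maxs Y by apply: subset_trans (subD1set _ _) DY.
have aD' : a \notin D :\ a by rewrite setD11.
split => //.
  apply/subsetP => x xD'; have xY := subsetP D'Y _ xD'.
  apply: (maxs_sub _ _ _ (subsetDl _ _)) => //.
  rewrite in_setD (DGG aY D'Y aD' xD') /=.
  by case/maxsP: xY.
by rewrite setD1K.
Qed.

Lemma part1 n : forall Y D, (#|D| <= n)%N -> D \subset maxs Y ->
  pi Y D = \sum_(A : {set T} | A \subset D)
        (-1) ^+ #|A| *: (Pr (gen Y A) * pi (Y :\: gen Y A) set0).
Proof.
elim: n => [|n IH] Y D HD DY.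
  move: HD; rewrite leqn0 cards_eq0 => /eqP ->.
  by rewrite sum_sub0 gen0 big_set0 setD0 cards0 expr0 scale1r mul1r.
case: (set_0Vmem D) => [->|[a aD]].
  by rewrite sum_sub0 gen0 big_set0 setD0 cards0 expr0 scale1r mul1r.
case: (step_facts DY aD) => aY D'Y aD' D'YG ->.
have HD' : (#|D :\ a| <= n)%N by move: HD; rewrite (cardsD1 a D) aD.
rewrite (keyK Heta aY D'Y aD') (IH _ _ HD' D'Y) (IH _ _ HD' D'YG).
rewrite sum_subsetU1 // mulr_sumr -sumrN; congr (_ + _).
apply: eq_bigr => A AD.
have aA : a \notin A by apply: contra aD'; apply: (subsetP AD).
rewrite cardsU1 aA add1n exprS mulN1r scaleNr GS1 GS2 -scalerAr mulrA.
by [].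
Qed.

Lemma part2 n : forall Y D, (#|D| <= n)%N -> D \subset maxs Y ->
  Pr (gen Y D) * pi (Y :\: gen Y D) set0 =
  \sum_(A : {set T} | A \subset D) (-1) ^+ #|A| *: pi Y A.
Proof.
elim: n => [|n IH] Y D HD DY.
  move: HD; rewrite leqn0 cards_eq0 => /eqP ->.
  by rewrite sum_sub0 gen0 big_set0 setD0 cards0 expr0 scale1r mul1r.
case: (set_0Vmem D) => [->|[a aD]].
  by rewrite sum_sub0 gen0 big_set0 setD0 cards0 expr0 scale1r mul1r.
case: (step_facts DY aD) => aY D'Y aD' D'YG ->.
have HD' : (#|D :\ a| <= n)%N by move: HD; rewrite (cardsD1 a D) aD.
rewrite GS1 GS2 -mulrA (IH _ _ HD' D'YG) sum_subsetU1 // -big_split mulr_sumr /=.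
apply: eq_bigr => A AD.
have aA : a \notin A by apply: contra aD'; apply: (subsetP AD).
have AY : A \subset maxs Y by apply: subset_trans AD D'Y.
rewrite cardsU1 aA add1n exprS mulN1r scaleNr (keyK Heta aY AY aA).
rewrite scalerBr opprB addrA -scalerAr.
by rewrite addrC addrA addNr add0r.
Qed.

End Main.
End Aux.

Theorem theorem3p2 (d : Order.disp_t) (T : finPOrderType d) (K : comNzRingType)
    (tau eta : T -> K) (Heta : forall i, eta i = tau i - 1) (Y : {set T}) :
  (forall D : {set T}, D \subset maxs Y ->
     pi_poset tau eta Y D =
     \sum_(A : {set T} | A \subset D)
        (-1) ^+ #|A| *: ((\prod_(i in gen Y A) ((tau i)%:P * 'X))
                          * pi_poset tau eta (Y :\: gen Y A) set0)) /\
  (forall D : {set T}, D \subset maxs Y ->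
     (\prod_(i in gen Y D) ((tau i)%:P * 'X)) * pi_poset tau eta (Y :\: gen Y D) set0 =
     \sum_(A : {set T} | A \subset D) (-1) ^+ #|A| *: pi_poset tau eta Y A).
Proof.
split=> D DY.
  exact: (part1 Heta (leqnn #|D|) DY).
exact: (part2 Heta (leqnn #|D|) DY).
Qed.
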